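(* Let $G$ be a triangulation and $v_0\in V(G)$. For every integer $k\ge 0$, the extended degree-bounded ball satisfies $|V(\bar B_k^8(v_0))|<5^k\, d(v_0)$.
   Context: A triangulation is a simple graph (with at least $4$ vertices) embedded in the sphere all of whose faces are triangles. For a vertex $v_0$ and integer $k\ge0$: $V_1$ is the set of vertices $v_1$ for which there is a path $P$ from $v_0$ to $v_1$ of length at most $k$ all of whose vertices other than $v_0$ have degree at most $8$; $B_k^8(v_0)=G[V_1]$ is the degree-bounded ball. $V_2$ is the set of vertices $v\ne v_0$ of degree at least $9$ for which there is a path from $v_0$ to $v$ of length at most $k$ whose internal vertices all have degree at most $8$. The extended degree-bounded ball is $\bar B_k^8(v_0)=G[V_1\cup V_2]$. *)

(* Defs.v *)
(* Triangulations of the sphere are encoded combinatorially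
   as rotation systems (combinatorial maps) of genus 0. *)
From mathcomp Require Import all_boot.
Set Implicit Arguments. Unset Strict Implicit. Unset Printing Implicit Defensive.

Section Triang.
Variable T : finType.

Definition simple_graph (e : rel T) : Prop :=
  symmetric e /\ irreflexive e.

Definition deg (e : rel T) (v : T) : nat := #|[set u | e v u]|.

Definition darts (e : rel T) : {set T * T} := [set p | e p.1 p.2].

Definition edges (e : rel T) : {set {set T}} :=
  [set [set p.1; p.2] | p in darts e].

(* rot v : the cyclic successor of a neighbour of v around v *)
Definition rotation_system (e : rel T) (rot : T -> T -> T) : Prop :=
  [/\ forall v u, e v u -> e v (rot v u),
      forall v u w, e v u -> e v w -> rot v u = rot v w -> u = w
    & forall v u w, e v u -> e v w -> exists n, iter n (rot v) u = w].

Definition face_step (rot : T -> T -> T) (p : T * T) : T * T :=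
  (p.2, rot p.2 p.1).

Definition face_of (rot : T -> T -> T) (p : T * T) : {set T * T} :=
  [set q | fconnect (face_step rot) p q].

Definition faces (e : rel T) (rot : T -> T -> T) : {set {set T * T}} :=
  [set face_of rot p | p in darts e].

(* A triangulation: simple connected graph with >= 4 vertices together with an
   embedding in the sphere (rotation system with Euler characteristic 2),
   all of whose faces are triangles (have exactly 3 darts). *)
Definition sphere_triangulation (e : rel T) (rot : T -> T -> T) : Prop :=
  [/\ simple_graph e /\ 3 < #|T|,
      forall x y : T, connect e x y,
      rotation_system e rot,
      #|T| + #|faces e rot| = #|edges e| + 2
    & forall p, p \in darts e -> #|face_of rot p| = 3].

(* A path from v0 of length n (number of edges) is encoded by the sequence p of
   its vertices after v0: v0 :: p is an e-path without repeated vertices. *)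
Definition is_path (e : rel T) (v0 : T) (p : seq T) : bool :=
  path e v0 p && uniq (v0 :: p).

Definition ball_V1 (e : rel T) (k : nat) (v0 : T) : {set T} :=
  [set v1 | [exists n : 'I_k.+1, exists p : n.-tuple T,
     [&& is_path e v0 p, last v0 p == v1 & all (fun x => deg e x <= 8) p]]].

Definition ball_V2 (e : rel T) (k : nat) (v0 : T) : {set T} :=
  [set v | (v != v0) && (9 <= deg e v) &&
     [exists n : 'I_k.+1, exists p : n.-tuple T,
       [&& is_path e v0 p, last v0 p == v
         & all (fun x => deg e x <= 8) (behead (belast v0 p))]]].

Definition ext_ball (e : rel T) (k : nat) (v0 : T) : {set T} :=
  ball_V1 e k v0 :|: ball_V2 e k v0.
End Triang.

(* Main.v *)
Require Import Defs.
From mathcomp Require Import all_boot zify.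
Set Implicit Arguments. Unset Strict Implicit. Unset Printing Implicit Defensive.

Section S.
Variable T : finType.

Lemma closed_connect (r : rel T) (S : {set T}) x y :
  (forall a b, a \in S -> r a b -> b \in S) -> x \in S -> connect r x y -> y \in S.
Proof.
move=> cl xS /connectP[p pth ->]; elim: p x xS pth => [|z p IH] x xS //=.
case/andP=> rxz pth; exact: IH (cl _ _ xS rxz) pth.
Qed.

Lemma closed_connectT (r : rel (T * T)) (S : {set T * T}) x y :
  (forall a b, a \in S -> r a b -> b \in S) -> x \in S -> connect r x y -> y \in S.
Proof.
move=> cl xS /connectP[p pth ->]; elim: p x xS pth => [|z p IH] x xS //=.
case/andP=> rxz pth; exact: IH (cl _ _ xS rxz) pth.
Qed.

Lemma card_bigcup_le (I : finType) (P : {set I}) (G : I -> {set T * T}) :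
  #|\bigcup_(i in P) G i| <= \sum_(i in P) #|G i|.
Proof.
apply: (@big_rec2 _ _ (fun (A : {set T * T}) (n : nat) => is_true (#|A| <= n))); first by rewrite cards0.
move=> i B m _ hB; apply: leq_trans (leq_card_setU _ B).1 _; exact: leq_add.
Qed.

Lemma rot_orbit2 (e : rel T) rot v a b y :
  rotation_system e rot -> e v a -> rot v a = b -> rot v b = a -> e v y ->
  (y == a) || (y == b).
Proof.
case=> _ _ tr eva ra rb evy; have [n <-] := tr _ _ _ eva evy.
elim: n => [|n IH] /=; first by rewrite eqxx.
by case/orP: IH => /eqP ->; rewrite ?ra ?rb eqxx ?orbT.
Qed.
End S.

Section Geo.
Variable T : finType.

Lemma tri_lemma (e : rel T) rot p u :
  sphere_triangulation e rot -> e p u ->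
  [/\ e u (rot u p), e p (rot u p), rot u p != p,
      rot (rot u p) u = p & rot p (rot u p) = u].
Proof.
rewrite /sphere_triangulation /simple_graph => -[[[sym irr] big] conn rs eul tri] epu.
have rs' := rs; case: rs' => rot1 rotinj _.
set f := face_step rot.
have fd : forall x, e x.1 x.2 -> e (f x).1 (f x).2.
  by case=> a b /= hab; apply: rot1; rewrite sym.
have finj : forall x y, e x.1 x.2 -> e y.1 y.2 -> f x = f y -> x = y.
  case=> a b [c d] /= hab hcd [hbd h]; subst d.
  by rewrite (rotinj b a c _ _ h) // sym.
set x0 := (p, u).
have d0 : e x0.1 x0.2 by [].
have d1 := fd _ d0; have d2 := fd _ d1; have d3 := fd _ d2.
have hx0 : x0 \in darts e by rewrite inE.
have hsz := tri _ hx0.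
have memF : forall n, iter n f x0 \in face_of rot x0.
  by move=> n; rewrite inE; apply: fconnect_iter.
have small : f (f x0) = x0 \/ f x0 = x0 -> False.
  move=> hc.
  have : face_of rot x0 \subset [set x0; f x0].
    apply/subsetP => y; rewrite inE => hy.
    apply: (closed_connectT _ _ hy); last by rewrite !inE eqxx.
    move=> a b; rewrite !inE /= => /orP[] /eqP -> /eqP <-;
      rewrite -/f ?eqxx ?orbT //.
    by rewrite -/f; case: hc => hh; rewrite !hh ?eqxx ?orbT.
  move/subset_leq_card; rewrite hsz cardsU1 cards1.
  by case: (x0 \notin [set f x0]).
have x3e : f (f (f x0)) = x0.
  apply/eqP; apply/negPn/negP => ne30.
  have n10 : f x0 != x0 by apply/negP => /eqP h; apply: small; right.
  have n20 : f (f x0) != x0 by apply/negP => /eqP h; apply: small; left.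
  have n12 : f x0 != f (f x0).
    by apply/negP => /eqP /(finj _ _ d0 d1) h; rewrite -h eqxx in n10.
  have n13 : f x0 != f (f (f x0)).
    by apply/negP => /eqP /(finj _ _ d0 d2) h; move: n20; rewrite -h eqxx.
  have n23 : f (f x0) != f (f (f x0)).
    by apply/negP => /eqP /(finj _ _ d1 d2) h; move: n12; rewrite -h eqxx.
  have : size [:: x0; f x0; f (f x0); f (f (f x0))] <= size (enum (face_of rot x0)).
    apply: uniq_leq_size.
      by rewrite /= !inE !negb_or n12 n13 n23 !(eq_sym x0) n10 n20 ne30.
    move=> y; rewrite mem_enum !inE => /or4P[] /eqP ->.
    - exact: (fconnect_iter _ 0).
    - exact: (fconnect_iter _ 1).
    - exact: (fconnect_iter _ 2).
    - exact: (fconnect_iter _ 3).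
  by rewrite -cardE hsz.
move: x3e d1 d2; rewrite /f /face_step /x0 /= => -[h1 h2] d1 d2.
rewrite h1 in h2.
have ew : e p (rot u p) by move: d2; rewrite h1 sym.
split => //.
apply/negP => /eqP hw; move: h1; rewrite hw => h1.
by move: (rot1 p u epu); rewrite h1 irr.
Qed.
End Geo.

Section Geo2.
Variable T : finType.

Lemma two_common (e : rel T) rot p u :
  sphere_triangulation e rot -> e p u ->
  exists a b, [/\ e u a, e p a, e u b, e p b & a != b].
Proof.
move=> H epu.
have H' := H; rewrite /sphere_triangulation /simple_graph in H'.
case: H' => [[[sym irr] big] conn rs eul tri].
have eup : e u p by rewrite sym.
have [a1 a2 a3 a4 a5] := tri_lemma H epu.
have [b1 b2 b3 b4 b5] := tri_lemma H eup.
exists (rot u p), (rot p u); split => //.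
apply/negP => /eqP hx.
set x := rot u p in a1 a2 a3 a4 a5 hx.
rewrite -hx in b1 b2 b3 b4 b5.
have nu : forall y, e u y -> (y == p) || (y == x).
  by move=> y; apply: (rot_orbit2 rs eup).
have np : forall y, e p y -> (y == u) || (y == x).
  by move=> y; apply: (rot_orbit2 rs epu).
have exu : e x u by rewrite sym.
have nx : forall y, e x y -> (y == u) || (y == p).
  by move=> y; apply: (rot_orbit2 rs exu).
have cl : forall y, y \in [set z in [:: p; u; x]].
  move=> y; apply: (@closed_connect _ e _ p); last exact: conn.
  - move=> c d; rewrite !inE => /or3P[] /eqP -> ed.
    + by case/orP: (np _ ed) => ->; rewrite ?orbT.
    + by case/orP: (nu _ ed) => ->; rewrite ?orbT.
    + by case/orP: (nx _ ed) => ->; rewrite ?orbT.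
  - by rewrite !inE eqxx.
have : #|T| <= #|[:: p; u; x]|.
  apply: subset_leq_card; apply/subsetP => y _; move: (cl y); by rewrite inE.
move/leq_trans/(_ (card_size _)) => /=; by rewrite ltnNge in big; move/negP: big.
Qed.
End Geo2.

Section Geo3.
Variable T : finType.

Lemma deg_bound (e : rel T) rot p u :
  sphere_triangulation e rot -> e p u ->
  #|[set w | [&& e u w, w != p & ~~ e p w]]| + 3 <= deg e u.
Proof.
move=> H epu.
have H' := H; rewrite /sphere_triangulation /simple_graph in H'.
case: H' => [[[sym irr] big] conn rs eul tri].
have [a [b [ua pa ub pb nab]]] := two_common H epu.
rewrite /deg.
set N := [set w | e u w].
have ap : a != p by apply/negP => /eqP h; move: pa; rewrite h irr.
have bp : b != p by apply/negP => /eqP h; move: pb; rewrite h irr.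
rewrite (cardsD1 p N) (cardsD1 a (N :\ p)) (cardsD1 b (N :\ p :\ a)).
rewrite !inE ua ub ap bp sym epu /= eq_sym nab /=.
rewrite !add1n addn3 !ltnS.
apply: subset_leq_card; apply/subsetP => w; rewrite !inE => /and3P[uw wp npw].
rewrite uw wp /= !andbT; apply/andP; split.
  by apply/negP => /eqP h; move: npw; rewrite h pb.
by apply/negP => /eqP h; move: npw; rewrite h pa.
Qed.

Lemma deg_v0 (e : rel T) rot v0 :
  sphere_triangulation e rot -> 2 <= deg e v0.
Proof.
move=> H.
have H' := H; rewrite /sphere_triangulation /simple_graph in H'.
case: H' => [[[sym irr] big] conn rs eul tri].
have [y yv] : exists y, y != v0.
  apply/existsP; apply: contraLR big => /existsPn hy; rewrite -leqNgt.
  suff h : #|T| <= #|[:: v0]| by apply: leq_trans h _; apply: leq_trans (card_size _) _.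
  apply: subset_leq_card; apply/subsetP => z _; move: (hy z).
  by rewrite negbK inE.
have [z ez] : exists z, e v0 z.
  move: (conn v0 y) => /connectP[[|z q] /= pth hy].
    by rewrite hy eqxx in yv.
  by case/andP: pth => ez _; exists z.
have [a [b [_ ua _ ub nab]]] := two_common H ez.
rewrite /deg (cardsD1 a) (cardsD1 b) !inE ua ub (eq_sym b a) nab.
by [].
Qed.
End Geo3.

Section Count.
Variable T : finType.
Variable e : rel T.
Variable v0 : T.

Definition G (pu : T * T) : {set T * T} :=
  [set q | [&& q.1 == pu.2, e pu.2 q.2, deg e pu.2 <= 8, q.2 != pu.1 & ~~ e pu.1 q.2]].
Definition F (P : {set T * T}) : {set T * T} := \bigcup_(pu in P) G pu.
Definition P1 : {set T * T} := [set q | (q.1 == v0) && e v0 q.2].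
Definition Pn j := iter j F P1.
Fixpoint R j : {set T} :=
  if j is j'.+1 then R j' :|: [set q.2 | q in Pn j'] else [set v0].

Lemma card_G rot pu : sphere_triangulation e rot -> e pu.1 pu.2 -> #|G pu| <= 5.
Proof.
case: pu => p u /= H epu.
have [d8|d9] := leqP (deg e u) 8; last first.
  rewrite (_ : G _ = set0) ?cards0 //; apply/setP => q; rewrite !inE /=.
  by rewrite leqNgt d9 /= !andbF.
have := deg_bound H epu.
set W := [set w | _].
move=> hW.
have : #|G (p, u)| <= #|W|.
  apply: leq_trans (leq_imset_card (fun w => (u, w)) W).
  apply: subset_leq_card; apply/subsetP => [[a b]]; rewrite !inE /=.
  case/and5P => /eqP -> ub _ bp pb; apply/imsetP; exists b => //.
  by rewrite inE ub bp pb.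
move=> h; apply: leq_trans h _.
by rewrite -(leq_add2r 3); apply: leq_trans hW _.
Qed.

Lemma card_F rot (P : {set T * T}) : sphere_triangulation e rot -> (forall pu, pu \in P -> e pu.1 pu.2) ->
  #|F P| <= 5 * #|P|.
Proof.
move=> H hP; apply: leq_trans (card_bigcup_le _ _) _.
rewrite mulnC -sum_nat_const; apply: leq_sum => i iP; exact: card_G H (hP _ iP).
Qed.

Lemma R_mono i j : i <= j -> R i \subset R j.
Proof.
move=> /subnK <-; elim: (j - i) => [|m IH] //=.
by apply: subset_trans IH (subsetUl _ _).
Qed.

Lemma v0R i : v0 \in R i.
Proof. by apply: (subsetP (R_mono (leq0n i))); rewrite inE. Qed.

Lemma Pn_inv j q : q \in Pn j ->
  [/\ e q.1 q.2, q.1 \in R j & (q.1 == v0) || (deg e q.1 <= 8)].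
Proof.
case: j => [|j]; first by rewrite inE => /andP[/eqP -> h]; rewrite v0R eqxx h.
rewrite /Pn iterS -/(Pn j) => /bigcupP[pu pP]; rewrite inE.
case/and5P => /eqP -> eq2 d8 _ _; split => //; last by rewrite d8 orbT.
by rewrite /= inE; apply/orP; right; apply/imsetP; exists pu.
Qed.
End Count.

Section Count2.
Variable T : finType.
Variable e : rel T.
Variable v0 : T.

Lemma R_step i u w : u \in R e v0 i -> (u == v0) || (deg e u <= 8) -> e u w ->
  w \in R e v0 i.+1.
Proof.
elim: i u w => [|i IH] u w.
  rewrite inE => /eqP -> _ euw; rewrite /= inE; apply/orP; right.
  by apply/imsetP; exists (v0, w) => //; rewrite inE eqxx euw.
have sub1 := subsetP (R_mono e v0 (leqnSn i.+1)).
rewrite [R _ _ i.+1]/= inE => /orP[uR|/imsetP[[p u'] qP /= ->{u}]] hu euw.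
  by apply: sub1; apply: IH uR hu euw.
have [epu pR hp] := Pn_inv qP; rewrite /= in epu pR hp.
have [huv|nuv] := eqVneq u' v0.
  subst u'; apply: sub1; apply: IH (v0R e v0 i) _ euw; by rewrite eqxx.
rewrite /= in hu; move: hu; rewrite (negbTE nuv) /= => d8.
have [hwp|nwp] := eqVneq w p.
  rewrite hwp; apply: sub1; exact: (subsetP (R_mono e v0 (leqnSn i)) _ pR).
have [epw|nepw] := boolP (e p w).
  by apply: sub1; apply: IH pR hp epw.
rewrite /= inE; apply/orP; right; apply/imsetP; exists (u', w) => //.
change ((u', w) \in F e (Pn e v0 i)); apply/bigcupP; exists (p, u') => //.
by rewrite inE /= eqxx euw d8 nwp nepw.
Qed.
End Count2.

Section Count3.
Variable T : finType.
Variable e : rel T.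
Variable v0 : T.

Lemma R_walk p : forall x i, x \in R e v0 i -> (x == v0) || (deg e x <= 8) ->
  path e x p -> all (fun y => deg e y <= 8) (behead (belast x p)) ->
  last x p \in R e v0 (i + size p).
Proof.
elim: p => [|y p IH] x i xR hx /=; first by rewrite addn0.
case/andP=> exy pth hall.
have yR := R_step xR hx exy.
case: p IH pth hall => [|z p] IH pth hall; first by rewrite /= addn1.
move: hall => /= /andP[dy hall].
rewrite -addSnnS; apply: (IH y i.+1 yR _ pth hall); by rewrite dy orbT.
Qed.

Lemma ext_sub k : ext_ball e k v0 \subset R e v0 k.
Proof.
apply/subsetP => y; rewrite !inE => /orP[] .
  case/existsP => n /existsP[p /and3P[/andP[pth _] /eqP <- hall]].
  have := R_walk (v0R e v0 0) _ pth; rewrite eqxx add0n size_tuple => /(_ isT).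
  case: (tval p) hall => [|z q] /= hall.
    move=> /(_ isT); apply: (subsetP (R_mono e v0 _)); exact: ltnSE (ltn_ord n).
  move=> /(_ _) h; apply: (subsetP (R_mono e v0 (ltnSE (ltn_ord n)))).
  apply: h; apply/allP => x /mem_belast; rewrite inE; case/andP: hall => hz /allP hq; case/orP => [/eqP ->|/hq] //.
case/andP=> _ /existsP[n /existsP[p /and3P[/andP[pth _] /eqP <- hall]]].
have := R_walk (v0R e v0 0) _ pth; rewrite eqxx add0n size_tuple => /(_ isT hall).
apply: (subsetP (R_mono e v0 _)); exact: (ltnSE (ltn_ord n)).
Qed.
End Count3.

Section Count4.
Variable T : finType.
Variable e : rel T.
Variable v0 : T.

Lemma card_Pn rot j : sphere_triangulation e rot -> #|Pn e v0 j| <= 5 ^ j * deg e v0.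
Proof.
move=> H; elim: j => [|j IH].
  rewrite expn0 mul1n /deg.
  apply: leq_trans (leq_imset_card (fun w => (v0, w)) [set w | e v0 w]).
  apply: subset_leq_card; apply/subsetP => [[a b]]; rewrite !inE /=.
  case/andP => /eqP -> eb; apply/imsetP; exists b => //; by rewrite inE.
change (#|F e (Pn e v0 j)| <= 5 ^ j.+1 * deg e v0).
apply: leq_trans (card_F H _) _.
  by move=> pu /Pn_inv [].
by rewrite expnS -mulnA leq_mul2l.
Qed.

Lemma card_R rot j : sphere_triangulation e rot ->
  4 * #|R e v0 j| + deg e v0 <= 4 + deg e v0 * 5 ^ j.
Proof.
move=> H; elim: j => [|j IH].
  have c1 : #|R e v0 0| = 1 by exact: (cards1 v0).
  rewrite c1 expn0 muln1; lia.
have h1 : #|R e v0 j.+1| <= #|R e v0 j| + 5 ^ j * deg e v0.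
  apply: leq_trans (leq_card_setU _ _).1 _; rewrite leq_add2l.
  exact: leq_trans (leq_imset_card _ _) (card_Pn j H).
rewrite expnS; move: IH h1; nia.
Qed.
End Count4.

Theorem lemma6p2 (T : finType) (e : rel T) (rot : T -> T -> T) (v0 : T) (k : nat) :
  sphere_triangulation e rot ->
  #|ext_ball e k v0| < 5 ^ k * deg e v0.
Proof.
move=> H.
have h1 := subset_leq_card (ext_sub e v0 k).
have h2 := card_R v0 k H.
have h3 := deg_v0 v0 H.
have h4 : 0 < 5 ^ k by rewrite expn_gt0.
move: h1 h2 h3 h4; nia.
Qed.
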